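(* Fix $\gamma\in(0,1]$ and $0<\alpha<0.25$, and let $\xi>0$ be arbitrarily small. There exist $C>0$ and $N_0$ such that for all $N\ge N_0$, $$-\frac1N\sum_{i=1}^b\big[(J^T(s^* ))^{-1}\big]_{ii}\,\tilde f_i(s^* )\le\frac{C}{N^{1-2\alpha-3\xi}}.$$
   Context: Let $N\ge1$, $\lambda=1-\gamma/N^\alpha$, and $b=b(N)\ge1$ an integer with $b=O(\log N)$. The mean-field vector field is $f_k(s)=\lambda(s_{k-1}^2-s_k^2)-(s_k-s_{k+1})$, $k=1,\dots,b$, with $s_0=1,s_{b+1}=0$; $s^*$ is its unique equilibrium in $\{s\in\mathbb R^b:1\ge s_1\ge\cdots\ge s_b\ge0\}$. $J(s^* )$ is the $b\times b$ tridiagonal Jacobian of $f$ at $s^*$ with $J_{kk}=-2\lambda s^*_k-1$, $J_{k,k+1}=1$, $J_{k+1,k}=2\lambda s^*_k$. $\tilde f_i(s)=\frac12[\lambda(s_{i-1}^2-s_i^2)+(s_i-s_{i+1})]$. (In the paper $[(J^T(s^* ))^{-1}]_{ii}=\nabla^2g(s)_{ii}$ for the solution $g$ of $\nabla g(s)\cdot J(s^* )(s-s^* )=\|s-s^*\|^2$, and the lemma is stated for $s$ with $\|s-s^*\|^{2r}\le N^{-\epsilon}$; the quantity does not depend on $s$.) *)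

(* Defs.v *)
From HB Require Import structures.
From mathcomp Require Import all_boot all_order all_algebra.
From mathcomp Require Import all_classical all_reals all_analysis.
Set Implicit Arguments. Unset Strict Implicit. Unset Printing Implicit Defensive.
Import Order.TTheory GRing.Theory Num.Theory.
Local Open Scope ring_scope.

Section Defs.
Variable R : realType.

Definition lam (gamma alpha : R) (N : nat) : R := 1 - gamma / (N%:R `^ alpha).

(* A state s = (s_1,...,s_b) is stored as s : 'cV_b with s_k = s (k-1) 0.
   sext s k is s_k extended with boundary values s_0 = 1, s_k = 0 for k > b. *)
Definition sext (b : nat) (s : 'cV[R]_b) (k : nat) : R :=
  if k == 0%N then 1 else
  match @insub nat (fun j => (j < b)%N) 'I_b k.-1 with
  | Some i => s i ord0
  | None => 0
  end.

(* the mean-field vector field, component k = i+1 *)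
Definition fvec (l : R) (b : nat) (s : 'cV[R]_b) : 'cV[R]_b :=
  \col_(i < b) (l * (sext s i ^+ 2 - sext s i.+1 ^+ 2)
                - (sext s i.+1 - sext s i.+2)).

(* tilde f, component i+1 *)
Definition ftilde (l : R) (b : nat) (s : 'cV[R]_b) (i : 'I_b) : R :=
  2^-1 * (l * (sext s i ^+ 2 - sext s i.+1 ^+ 2) + (sext s i.+1 - sext s i.+2)).

Definition in_region (b : nat) (s : 'cV[R]_b) : Prop :=
  forall k : nat, (k <= b)%N -> sext s k.+1 <= sext s k.

Definition jac (l : R) (b : nat) (s : 'cV[R]_b) : 'M[R]_b :=
  \matrix_(i < b, j < b)
    if i == j then - 2 * l * s i ord0 - 1
    else if (val j == (val i).+1)%N then 1
    else if (val i == (val j).+1)%N then 2 * l * s j ord0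
    else 0.

End Defs.

(* Main.v *)
Require Import Defs.
From HB Require Import structures.
From mathcomp Require Import all_boot all_order all_algebra.
From mathcomp Require Import all_classical all_reals all_analysis.
From mathcomp Require Import ring lra.
Import Order.TTheory GRing.Theory Num.Theory.
Local Open Scope ring_scope.


Fixpoint Tf (R : realType) (r : nat -> R) (k : nat) : R :=
  match k with 0 => 1 | k'.+1 => Tf R r k' * r k'.+1 end.
Fixpoint Qf (R : realType) (r : nat -> R) (k : nat) : R :=
  match k with 0 => 0 | k'.+1 => (Qf R r k' + 1) * r k'.+1 end.
Arguments Tf {R}.
Arguments Qf {R}.

Lemma key (R : realType) (b i : nat) (l : R) (s y : nat -> R) :
  0 <= l -> l < 1 -> s 0%N = 1 -> (forall k, s k.+1 <= s k) -> (forall k, 0 <= s k) ->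
  s b.+1 = 0 ->
  (forall k, (k < b)%N -> l * (s k ^+ 2 - s k.+1 ^+ 2) = s k.+1 - s k.+2) ->
  y 0%N = 0 -> y b.+1 = 0 ->
  (forall m, (1 <= m <= b)%N ->
     (y m - y m.-1) - 2 * l * s m * (y m.+1 - y m) = (m == i)%:R) ->
  (1 <= i <= b)%N ->
  y i * (1 - l) <= i%:R.
Proof.
move=> l0 l1 s0 sdec sge0 sb eq y0 yb ey /andP[i1 ib].
have sle1 : forall k, s k <= 1.
  elim=> [|k IH]; first by rewrite s0.
  exact: le_trans (sdec k) IH.
have tele : forall m, (m <= b)%N -> s 1%N - s m.+1 = l * (1 - s m ^+ 2).
  elim=> [|m IH] hm; first by rewrite s0; lra.
  have := eq m hm; have := IH (ltnW hm); lra.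
have s1l : s 1%N <= l.
  have := tele b (leqnn b); rewrite sb.
  have := sge0 b; nra.
set d0 := 1 - s 1%N.
have d0pos : 1 - l <= d0 by rewrite /d0; lra.
have d0le1 : d0 <= 1 by rewrite /d0; have := sge0 1%N; lra.
set r := fun k => 2 * l * s k.
have rge0 : forall k, 0 <= r k by move=> k; rewrite /r; have := sge0 k; nra.
have rdec : forall k, r k.+1 <= r k by move=> k; rewrite /r; have := sdec k; nra.
have Td : forall k, (k <= b)%N -> Tf r k * d0 <= s k - s k.+1.
  elim=> [|k IH] hk; first by rewrite /= /d0 s0; lra.
  have IH' := IH (ltnW hk); have eqk := eq k hk; rewrite /=.
  have e : s k.+1 - s k.+2 = l * (s k + s k.+1) * (s k - s k.+1) by rewrite -eqk; ring.
  have a : r k.+1 * (Tf r k * d0) <= r k.+1 * (s k - s k.+1) by apply: ler_wpM2l.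
  have bnd : r k.+1 * (s k - s k.+1) <= l * (s k + s k.+1) * (s k - s k.+1).
    rewrite /r; have := sdec k; have := sge0 k.+1; move=> h1 h2.
    have h3 : 0 <= l * (s k - s k.+1) by apply: mulr_ge0 => //; lra.
    nra.
  rewrite e; rewrite mulrAC [_ * r _]mulrC -mulrA; lra.
have Tge0 : forall k, 0 <= Tf r k.
  elim=> [|k IH] /=; first lra. exact: mulr_ge0.
have T1 : forall k, (k <= b)%N -> Tf r k * d0 <= 1.
  move=> k hk; have := Td k hk; have := sle1 k; have := sge0 k.+1; lra.
have Qge0 : forall k, 0 <= Qf r k.
  elim=> [|k IH] /=; first lra. apply: mulr_ge0 => //; lra.
have phase : forall k, (k <= b)%N -> (k == 0%N) || (1 <= r k) ->
    1 <= Tf r k /\ Qf r k <= k%:R * Tf r k.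
  elim=> [|k IH] hk h /=; first by lra.
  have hk' : (k == 0%N) || (1 <= r k).
    case: (k =P 0%N) => //= _; have := rdec k; move: h => /= h; lra.
  have [IH1 IH2] := IH (ltnW hk) hk'.
  move: h => /= h.
  have := rge0 k.+1; rewrite -natr1; split; nra.
have Qb : forall k, (k <= b)%N -> Qf r k * d0 <= k%:R.
  elim=> [|k IH] hk /=; first lra.
  have IH' := IH (ltnW hk).
  have := Qge0 k; have := rge0 k.+1; rewrite -natr1 => h1 h2.
  case: (lerP (r k.+1) 1) => hr.
    have : (Qf r k + 1) * r k.+1 * d0 <= (Qf r k + 1) * d0.
      apply: ler_wpM2r; first lra. rewrite -[X in _ <= X]mulr1. apply: ler_wpM2l => //; lra.
    lra.
  have [P1 P2] := phase k.+1 hk (ltW hr).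
  move: P2 => /= P2.
  have := T1 k.+1 hk => /= P3.
  rewrite -natr1 in P2.
  have : (Qf r k + 1) * r k.+1 * d0 <= (k%:R + 1) * (Tf r k * r k.+1) * d0.
    apply: ler_wpM2r; lra.
  have k0 : 0 <= k%:R + 1 :> R by have := ler0n R k; lra.
  have := ler_wpM2l k0 P3.
  rewrite !mulrA; lra.
have lower : forall k, (k.+1 <= i)%N -> y k = Qf r k * (y k.+1 - y k).
  elim=> [|k IH] hk /=; first by rewrite y0; ring.
  have IH' := IH (ltnW hk).
  have hm : (1 <= k.+1 <= b)%N by apply/andP; split => //; apply: leq_trans ib; apply: ltnW.
  have := ey k.+1 hm.
  have -> : (k.+1 == i) = false by apply/negbTE; rewrite neq_ltn hk.
  rewrite /= => e.
  have e2 : y k.+1 - y k = r k.+1 * (y k.+2 - y k.+1) by rewrite /r; lra.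
  transitivity ((Qf r k + 1) * (y k.+1 - y k)).
    by rewrite mulrDl mul1r -IH'; ring.
  by rewrite e2; ring.
have upper : forall t k, (k + t)%N = b -> (i <= k)%N ->
    exists c, 0 <= c /\ y k.+1 - y k = - c * y k.
  elim=> [|t IH] k hkt hik.
    exists 1; split; first lra. rewrite addn0 in hkt; rewrite hkt yb; ring.
  have hk1 : (k.+1 + t)%N = b by rewrite addSnnS.
  have [c [c0 hc]] := IH k.+1 hk1 (leqW hik).
  have hm : (1 <= k.+1 <= b)%N.
    by apply/andP; split => //; rewrite -hkt addnS ltnS leq_addr.
  have := ey k.+1 hm.
  have -> : (k.+1 == i) = false by apply/negbTE; rewrite neq_ltn ltnS hik orbT.
  rewrite /= => e.
  have rk := rge0 k.+1.
  have den : 0 < 1 + r k.+1 * c by have := mulr_ge0 rk c0; lra.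
  exists (r k.+1 * c / (1 + r k.+1 * c)); split.
    by apply: divr_ge0 => //; [apply: mulr_ge0 | lra].
  have e2 : y k.+1 - y k = - r k.+1 * c * y k.+1 by rewrite /r; move: e; rewrite hc; lra.
  have e3 : y k.+1 * (1 + r k.+1 * c) = y k by lra.
  rewrite e2 -e3; field; by rewrite gt_eqF.
have [c [c0 hc]] := upper (b - i)%N i (subnKC ib) (leqnn i).
have [i' ei] : exists i', i = i'.+1 by case: i i1 {ib hc upper lower ey} => // i' _; exists i'.
subst i.
have lo := lower i' (leqnn _).
have hi1 : (1 <= i'.+1 <= b)%N by rewrite i1 ib.
have := ey i'.+1 hi1.
rewrite eqxx /= => e.
have hQ := Qb i' (ltnW ib).
have Q0 := Qge0 i'.
have rk := rge0 i'.+1.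
set A := Qf r i' + 1.
have eA : y i'.+1 * (1 + A * r i'.+1 * c) = A.
  rewrite /A; move: e lo; rewrite hc /r; set Y := y i'.+1; set Z := y i'; nra.
have yA : y i'.+1 <= A.
  have := mulr_ge0 (mulr_ge0 (addr_ge0 Q0 ler01) rk) c0; rewrite -/A => h.
  case: (lerP (y i'.+1) 0) => hy; first by rewrite /A; lra.
  nra.
case: (lerP (y i'.+1) 0) => hy.
  have : y i'.+1 * (1 - l) <= 0 by apply: mulr_le0_ge0 => //; lra.
  move=> h; apply: le_trans h _; exact: ler0n.
rewrite -natr1.
have : y i'.+1 * (1 - l) <= y i'.+1 * d0 by apply: ler_wpM2l; lra.
have : y i'.+1 * d0 <= A * d0 by apply: ler_wpM2r; lra.
rewrite /A; nra.
Qed.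


Lemma sext0 (R : realType) b (v : 'cV[R]_b) : sext v 0 = 1.
Proof. by []. Qed.

Lemma sext_ord (R : realType) b (v : 'cV[R]_b) (j : 'I_b) : sext v (val j).+1 = v j ord0.
Proof.
rewrite /sext /=; case: insubP => /= [u _ hu|]; last by rewrite ltn_ord.
by congr (v _ _); apply: val_inj.
Qed.

Lemma sext_out (R : realType) b (v : 'cV[R]_b) k : (b < k)%N -> sext v k = 0.
Proof.
move=> hk; rewrite /sext; case: eqP => [e|_]; first by rewrite e in hk.
case: insubP => //= u hu _; exfalso.
by case: k hk hu => // k; rewrite ltnS /= => h1 h2; move: (leq_trans h2 h1); rewrite ltnn.
Qed.

Lemma sum_delta (R : realType) b m (z : nat -> R) :
  \sum_(j < b) (val j == m)%:R * z j = (m < b)%:R * z m.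
Proof.
elim: b => [|b IH]; first by rewrite big_ord0 ltn0 mul0r.
rewrite big_ord_recr /= IH.
case: (eqVneq b m) => [->|ne]; first by rewrite ltnn ltnSn /= mul0r add0r.
by rewrite [(m < b.+1)%N]ltnS [(m <= b)%N]leq_eqVlt (eq_sym m b) (negbTE ne) /= mul0r addr0.
Qed.

Lemma pt (R : realType) (j k : nat) (A B xj : R) :
  (if j == k then A else if k == j.+1 then 1 else if j == k.+1 then B else 0) * xj
  = (j == k)%:R * (A * xj) + (j.+1 == k)%:R * xj + (j == k.+1)%:R * (B * xj).
Proof.
case: (ltngtP j k) => h.
- rewrite (ltn_eqF (ltn_trans h (ltnSn k))) (eq_sym (j.+1) k).
  by case: (k == j.+1) => /=; ring.
- rewrite (ltn_eqF (ltn_trans h (ltnSn j))) (gtn_eqF (ltn_trans h (ltnSn j))).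
  by case: (j == k.+1) => /=; ring.
- subst j; rewrite (ltn_eqF (ltnSn k)) (gtn_eqF (ltnSn k)) /=; ring.
Qed.

Lemma sum3 (R : realType) b k (A B : R) (x : nat -> R) :
  (forall n, (b <= n)%N -> x n = 0) -> (k < b)%N ->
  \sum_(j < b) (if val j == k then A else if k == (val j).+1 then 1
                else if val j == k.+1 then B else 0) * x j
  = A * x k + (0 < k)%:R * x k.-1 + B * x k.+1.
Proof.
move=> xo kb.
rewrite (eq_bigr _ (fun j _ => pt _ _ _ _ _ _)) !big_split /= (@sum_delta _ _ _ (fun n => A * x n)) (@sum_delta _ _ _ (fun n => B * x n)) kb.
have -> : \sum_(i < b) ((val i).+1 == k)%:R * x i = (0 < k)%:R * x k.-1.
  case: k kb => [|k] kb /=.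
    by rewrite mul0r big1 // => j _; rewrite mul0r.
  under eq_bigr do rewrite eqSS.
  by rewrite sum_delta (ltnW kb).
rewrite /= mulr1n mul1r.
case: (ltnP k.+1 b) => h /=; first by rewrite mulr1n mul1r.
by rewrite (xo k.+1 h) !mulr0.
Qed.


Lemma diag_bound (R : realType) (b : nat) (l : R) (ss : 'cV[R]_b) (i0 : 'I_b) :
  0 <= l -> l < 1 -> in_region ss -> fvec l ss = 0 ->
  - (invmx (jac l ss)^T) i0 i0 * (1 - l) <= 3 * b%:R.
Proof.
move=> l0 l1 reg feq.
pose s := sext ss.
have s0 : s 0%N = 1 by [].
have sout : forall k, (b < k)%N -> s k = 0 by move=> k hk; exact: sext_out.
have sdec : forall k, s k.+1 <= s k.
  move=> k; case: (leqP k b) => hk; first exact: reg.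
  by rewrite /s !sext_out // ltnW.
have santi : forall n m, s (m + n)%N <= s m.
  elim=> [|n IH] m; first by rewrite addn0.
  by rewrite addnS; apply: le_trans (sdec _) (IH m).
have sge0 : forall k, 0 <= s k.
  by move=> k; rewrite -(sout (k + b.+1)%N) ?santi // addnS ltnS leq_addl.
have sle1 : forall k, s k <= 1 by move=> k; rewrite -s0 -{1}(add0n k); exact: santi.
have eq : forall k, (k < b)%N -> l * (s k ^+ 2 - s k.+1 ^+ 2) = s k.+1 - s k.+2.
  move=> k kb; have := congr1 (fun M : 'cV[R]_b => M (Ordinal kb) ord0) feq.
  rewrite !mxE /= => h; rewrite /s; lra.
have ssv : forall j : 'I_b, ss j ord0 = s (val j).+1 by move=> j; rewrite /s sext_ord.
have b1 : (1 <= b)%N by apply: leq_ltn_trans (ltn_ord i0).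
case: (boolP ((jac l ss)^T \in unitmx)) => U; last first.
  have U' : (jac l ss)^T \in [predC unitmx] by rewrite inE U.
  rewrite (invmx_out U') !mxE eqxx ssv.
  have := sge0 (val i0).+1; have := sle1 (val i0).+1.
  have : 1 <= b%:R :> R by rewrite ler1n.
  nra.
set X := invmx (jac l ss)^T.
have H : (jac l ss)^T *m X = 1%:M by rewrite /X mulmxV.
pose x := fun n => sext (col i0 X) n.+1.
pose y := fun m => if m is 0 then 0 else - sext (col i0 X) m.
have xo : forall n, (b <= n)%N -> x n = 0 by move=> n hn; rewrite /x sext_out.
have xy : forall n, x n = - y n.+1 by move=> n; rewrite /y opprK.
have ey : forall m, (1 <= m <= b)%N ->
     (y m - y m.-1) - 2 * l * s m * (y m.+1 - y m) = (m == (val i0).+1)%:R.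
  case=> [//|k] /andP[_ kb].
  have := congr1 (fun M : 'M[R]_b => M (Ordinal kb) i0) H.
  rewrite !mxE.
  rewrite (eq_bigr (fun j : 'I_b => (if val j == k then - 2 * l * ss (Ordinal kb) ord0 - 1
      else if k == (val j).+1 then 1 else if val j == k.+1 then 2 * l * ss (Ordinal kb) ord0
      else 0) * x (val j))); last first.
    move=> j _; rewrite !mxE /x sext_ord mxE.
    case: (eqVneq j (Ordinal kb)) => [->|ne] /=; first by rewrite eqxx.
    have -> : (val j == k) = false by apply/negbTE; apply: contra_neq ne => h; apply: val_inj.
    done.
  rewrite sum3 // ssv /= => E.
  rewrite -E !xy.
  case: k {kb E} => [|k] /=; rewrite /y /=; ring.
have yb : y b.+1 = 0 by rewrite /y sext_out ?oppr0.
have hi : (1 <= (val i0).+1 <= b)%N by rewrite /= ltn_ord.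
have := @key R b (val i0).+1 l s y l0 l1 s0 sdec sge0 (sout _ (ltnSn b)) eq (erefl _) yb ey hi.
rewrite /y sext_ord mxE => h.
apply: le_trans h _.
have : ((val i0).+1%:R : R) <= b%:R by rewrite ler_nat ltn_ord.
have := ler0n R b; lra.
Qed.


Lemma sprops (R : realType) b (ss : 'cV[R]_b) : in_region ss ->
  (forall k, sext ss k.+1 <= sext ss k) /\ (forall k, 0 <= sext ss k) /\
  (forall k, sext ss k <= 1).
Proof.
move=> reg; pose s := sext ss.
have s0 : s 0%N = 1 by [].
have sout : forall k, (b < k)%N -> s k = 0 by move=> k hk; exact: sext_out.
have sdec : forall k, s k.+1 <= s k.
  move=> k; case: (leqP k b) => hk; first exact: reg.
  by rewrite /s !sext_out // ltnW.
have santi : forall n m, s (m + n)%N <= s m.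
  elim=> [|n IH] m; first by rewrite addn0.
  by rewrite addnS; apply: le_trans (sdec _) (IH m).
have sge0 : forall k, 0 <= s k.
  by move=> k; rewrite -(sout (k + b.+1)%N) ?santi // addnS ltnS leq_addl.
have sle1 : forall k, s k <= 1 by move=> k; rewrite -s0 -{1}(add0n k); exact: santi.
by split; [|split].
Qed.

Lemma ft01 (R : realType) b (l : R) (ss : 'cV[R]_b) (i : 'I_b) :
  0 <= l -> l <= 1 -> in_region ss -> 0 <= ftilde l ss i <= 1.
Proof.
move=> l0 l1 reg; have [sdec [sge0 sle1]] := @sprops R b ss reg.
rewrite /ftilde.
have h1 := sdec i; have h2 := sdec i.+1; have h3 := sge0 i.+2; have h4 := sle1 i.
set a := sext ss i in h1 h4 *; set c := sext ss i.+1 in h1 h2 *; set d := sext ss i.+2 in h2 h3 *.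
have q0 : 0 <= a ^+ 2 - c ^+ 2 by rewrite !expr2; nra.
have q1 : a ^+ 2 - c ^+ 2 <= 1 by rewrite !expr2; nra.
have m0 : 0 <= l * (a ^+ 2 - c ^+ 2) by apply: mulr_ge0.
have m1 : l * (a ^+ 2 - c ^+ 2) <= 1 by nra.
apply/andP; split; lra.
Qed.

Lemma sum_bound (R : realType) b (l : R) (ss : 'cV[R]_b) :
  0 <= l -> l < 1 -> in_region ss -> fvec l ss = 0 ->
  - (\sum_(i < b) (invmx (jac l ss)^T) i i * ftilde l ss i) * (1 - l)
    <= b%:R * (3 * b%:R).
Proof.
move=> l0 l1 reg feq.
have -> : - (\sum_(i < b) (invmx (jac l ss)^T) i i * ftilde l ss i) * (1 - l) =
   \sum_(i < b) (- (invmx (jac l ss)^T) i i * (1 - l)) * ftilde l ss i.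
  by rewrite -sumrN mulr_suml; apply: eq_bigr => i _; ring.
have -> : b%:R * (3 * b%:R) = \sum_(i < b) (3 * b%:R : R).
  by rewrite sumr_const card_ord mulr_natl.
apply: ler_sum => i _.
have hd := @diag_bound R b l ss i l0 l1 reg feq.
have /andP[f0 f1] := @ft01 R b l ss i l0 (ltW l1) reg.
have : 0 <= 3 * b%:R :> R by have := ler0n R b; lra.
set a := - _ * _ in hd *; set f := ftilde _ _ _ in f0 f1 *.
nra.
Qed.


Theorem lemma11 (R : realType) (gamma alpha xi : R) (b : nat -> nat) :
  0 < gamma -> gamma <= 1 -> 0 < alpha -> alpha < 4^-1 -> 0 < xi ->
  (forall N : nat, (1 <= b N)%N) ->
  (exists K : R, exists N1 : nat, forall N : nat, (N1 <= N)%N ->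
      (b N)%:R <= K * ln (N%:R : R)) ->
  exists C : R, 0 < C /\ exists N0 : nat, forall N : nat, (N0 <= N)%N ->
    forall sstar : 'cV[R]_(b N),
      in_region sstar -> fvec (lam gamma alpha N) sstar = 0 ->
      - (N%:R)^-1 * \sum_(i < b N)
          (invmx (jac (lam gamma alpha N) sstar)^T) i i
            * ftilde (lam gamma alpha N) sstar i
      <= C / (N%:R `^ (1 - 2 * alpha - 3 * xi)).
Proof.
move=> g0 g1 a0 a4 x0 b1 [K [N1 hK]].
pose e := alpha / 2.
have e0 : 0 < e by rewrite /e; lra.
pose D := 3 * K ^+ 2 / (e ^+ 2 * gamma).
have D0 : 0 <= D.
  rewrite /D; apply: divr_ge0; first by have := sqr_ge0 K; rewrite expr2; lra.
  by apply: mulr_ge0 => //; [apply: sqr_ge0 | lra].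
exists (D + 1); split; first lra.
exists (maxn N1 1) => N hN ss reg feq.
have hN1 : (N1 <= N)%N by apply: leq_trans hN; apply: leq_maxl.
have hN2 : (1 <= N)%N by apply: leq_trans hN; apply: leq_maxr.
set p := (N%:R : R).
have p1 : 1 <= p by rewrite /p ler1n.
have p0 : 0 < p by lra.
set u := p `^ alpha.
have u1 : 1 <= u by rewrite /u -(powRr0 p); apply: ler_powR => //; lra.
set l := lam gamma alpha N.
have le : 1 - l = gamma / u by rewrite /l /lam; ring.
have gu0 : 0 < gamma / u by apply: divr_gt0 => //; lra.
have gu1 : gamma / u <= 1 by rewrite ler_pdivrMr; lra.
have l0 : 0 <= l by lra.
have l1 : l < 1 by lra.
have hs := @sum_bound R (b N) l ss l0 l1 reg feq.
set S := \sum_(i < b N) _ in hs *.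
rewrite le in hs.
have bb := hK N hN1.
have bpos : 1 <= (b N)%:R :> R by rewrite ler1n.
have lnp0 : 0 <= ln p by apply: ln_ge0.
set w := p `^ e.
have w0 : 0 < w by apply: powR_gt0.
have lnw : ln w <= w - 1.
  have wm : -1 < w - 1 by lra.
  have := @le_ln1Dx R (w - 1) wm.
  by have -> : 1 + (w - 1) = w by ring.
have elnp : e * ln p <= w by move: lnw; rewrite /w ln_powR; lra.
have ww : w * w = u.
  rewrite /w -powRD; last by rewrite (gt_eqF p0) /= implybT.
  by rewrite /u /e; congr (_ `^ _); field.
have sq : (e * ln p) ^+ 2 <= u.
  rewrite -ww expr2; apply: ler_pM => //; apply: mulr_ge0 => //; lra.
have bsq : (b N)%:R ^+ 2 <= K ^+ 2 * ln p ^+ 2.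
  rewrite -exprMn expr2 [X in _ <= X]expr2; apply: ler_pM; lra.
have e2b : e ^+ 2 * (b N)%:R ^+ 2 <= K ^+ 2 * u.
  have := ler_wpM2l (sqr_ge0 e) bsq.
  have := ler_wpM2l (sqr_ge0 K) sq.
  rewrite exprMn; move=> h1 h2; apply: le_trans h2 _.
  by rewrite mulrCA.
set T := - S in hs.
have Tg : T * gamma <= (b N)%:R * (3 * (b N)%:R) * u.
  have un0 : u != 0 by rewrite gt_eqF // (lt_le_trans ltr01 u1).
  have -> : T * gamma = T * (gamma / u) * u by field.
  exact: ler_wpM2r (ltW (lt_le_trans ltr01 u1)) _ _ hs.
have Te : e ^+ 2 * (T * gamma) <= 3 * K ^+ 2 * (u * u).
  have h1 := ler_wpM2l (sqr_ge0 e) Tg.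
  have u0 : 0 <= 3 * u by have := lt_le_trans ltr01 u1; lra.
  have h2 := ler_wpM2r u0 e2b.
  have E1 : e ^+ 2 * ((b N)%:R * (3 * (b N)%:R) * u) = e ^+ 2 * (b N)%:R ^+ 2 * (3 * u) by ring.
  have E2 : K ^+ 2 * u * (3 * u) = 3 * K ^+ 2 * (u * u) by ring.
  rewrite E1 in h1; rewrite E2 in h2; exact: le_trans h1 h2.
have eg0 : 0 < e ^+ 2 * gamma by apply: mulr_gt0 => //; apply: exprn_gt0.
have TD : T <= D * (u * u).
  rewrite /D mulrAC ler_pdivlMr //.
  by move: Te; rewrite mulrCA mulrA [_ * e ^+ 2]mulrC.
set v := p `^ (1 - 2 * alpha - 3 * xi).
have v0 : 0 < v by apply: powR_gt0.
have uuv : u * u * v <= p.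
  rewrite /u /v -!powRD; try by rewrite (gt_eqF p0) /= implybT.
  rewrite -{2}(powRr1 (ltW p0)); apply: ler_powR => //; lra.
rewrite ler_pdivlMr //.
have Tv : T * v <= D * p.
  apply: le_trans (ler_wpM2l D0 uuv); rewrite mulrA; apply: ler_wpM2r; lra.
have -> : - p^-1 * S * v = p^-1 * (T * v) by rewrite /T; ring.
have : p^-1 * (T * v) <= p^-1 * (D * p) by apply: ler_wpM2l => //; rewrite invr_ge0; lra.
have pn0 : p != 0 by rewrite gt_eqF.
have -> : p^-1 * (D * p) = D by field.
lra.
Qed.
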